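(* Let $G=(V,E)$ be a connected, locally finite, undirected graph, let $s:V\to\mathbb{R}$, and let $u_\infty$ be the odometer of $s$. Then for all $x\in V$, $$u_\infty(x)=\sup\{\ell_\infty(x): \ell \text{ is a legal toppling procedure for } s\}.$$
   Context: $\Delta u(x)=\sum_{y\sim x}(u(y)-u(x))$; $\mathcal{F}_s=\{f:V\to\mathbb{R}: f\ge0,\ s+\Delta f\le1\}$; the odometer is $u_\infty(x)=\inf\{f(x):f\in\mathcal{F}_s\}$ with $\inf\emptyset=\infty$. A toppling procedure is given by a well-ordered closed set $T\subset[0,\infty)$ with $0\in T$ and a function $(t,x)\mapsto u_t(x)\in[0,\infty)$ on $T\times V$ such that $u_0=0$, $u_t(x)$ is nondecreasing in $t$, and $t_n\uparrow t$ implies $u_{t_n}(x)\uparrow u_t(x)$. With $s_t=s+\Delta u_t$ and $t^-=\sup\{r\in T:r<t\}$, it is legal for $s$ if $u_t(x)-u_{t^-}(x)\le (s_{t^-}(x)-1)^+/\deg(x)$ for all $x$ and $t\in T\setminus\{0\}$. Write $\ell_\infty(x)=\lim_{t\to\sup T}\ell_t(x)\in[0,\infty]$. *)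

(* Defs.v *)
From HB Require Import structures.
From mathcomp Require Import all_boot all_order all_algebra.
From mathcomp Require Import all_classical all_reals all_analysis.
Set Implicit Arguments. Unset Strict Implicit. Unset Printing Implicit Defensive.
Import Order.TTheory GRing.Theory Num.Theory.
Import numFieldNormedType.Exports.
Local Open Scope classical_set_scope.
Local Open Scope ring_scope.

(* A locally finite undirected simple graph on vertex type V is given by its
   (finite, duplicate-free) neighbour lists: y ~ x  iff  y \in nbr x. *)
Definition undirected_locally_finite (V : eqType) (nbr : V -> seq V) : Prop :=
  (forall x, uniq (nbr x)) /\
  (forall x y, (y \in nbr x) = (x \in nbr y)) /\
  (forall x, x \notin nbr x).

Definition graph_connected (V : eqType) (nbr : V -> seq V) : Prop :=
  forall x y : V, exists p : seq V,
    path (fun a b => b \in nbr a) x p /\ last x p = y.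

Definition deg (V : eqType) (nbr : V -> seq V) (x : V) : nat := size (nbr x).

Definition laplacian (R : realType) (V : eqType) (nbr : V -> seq V)
  (f : V -> R) (x : V) : R := \sum_(y <- nbr x) (f y - f x).

Definition Fs (R : realType) (V : eqType) (nbr : V -> seq V) (s : V -> R) :
  set (V -> R) :=
  [set f | (forall x, 0 <= f x) /\ (forall x, s x + laplacian nbr f x <= 1)].

(* Odometer: u_oo(x) = inf { f(x) : f in F_s }, inf of the empty set = +oo. *)
Definition odometer (R : realType) (V : eqType) (nbr : V -> seq V) (s : V -> R)
  (x : V) : \bar R :=
  ereal_inf [set (f x)%:E | f in Fs nbr s].

Definition well_ordered_set (R : realType) (T : set R) : Prop :=
  forall A : set R, A `<=` T -> A !=set0 ->
    exists2 m, A m & forall a, A a -> m <= a.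

(* Toppling procedure (T, u): u t x = u_t(x); only values for t in T matter. *)
Definition toppling_procedure (R : realType) (V : eqType)
  (T : set R) (u : R -> V -> R) : Prop :=
  [/\ well_ordered_set T, closed T, T 0 & T `<=` [set t | 0 <= t]] /\
  [/\ (forall x, u 0 x = 0),
      (forall t x, T t -> 0 <= u t x),
      (forall t r x, T t -> T r -> t <= r -> u t x <= u r x) &
      (forall (tn : nat -> R) (t : R), (forall n, T (tn n)) ->
          {homo tn : n m / (n <= m)%N >-> n <= m} ->
          tn @ \oo --> t ->
          forall x, (fun n => u (tn n) x) @ \oo --> u t x)].

Definition tminus (R : realType) (T : set R) (t : R) : R :=
  sup [set r | T r /\ r < t].

Definition s_at (R : realType) (V : eqType) (nbr : V -> seq V) (s : V -> R)
  (u : R -> V -> R) (t : R) (x : V) : R := s x + laplacian nbr (u t) x.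

Definition legal (R : realType) (V : eqType) (nbr : V -> seq V) (s : V -> R)
  (T : set R) (u : R -> V -> R) : Prop :=
  forall t x, T t -> t != 0 ->
    u t x - u (tminus T t) x <=
      Num.max 0 (s_at nbr s u (tminus T t) x - 1) / (deg nbr x)%:R.

(* l_oo(x) = lim_{t -> sup T} l_t(x); as l_t(x) is nondecreasing on T,
   this limit is the supremum over T, in [0, +oo]. *)
Definition final_value (R : realType) (V : eqType) (T : set R)
  (u : R -> V -> R) (x : V) : \bar R :=
  ereal_sup [set (u t x)%:E | t in T].

(* Main.v *)
Require Import Defs.
From mathcomp Require Import all_boot all_order all_algebra.
From mathcomp Require Import all_classical all_reals all_analysis.
From mathcomp Require Import lra.
Import Order.TTheory GRing.Theory Num.Theory.
Import numFieldNormedType.Exports.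
Local Open Scope classical_set_scope.
Local Open Scope ring_scope.

Section Aux.
Variables (R : realType) (V : eqType) (nbr : V -> seq V).

Lemma sum_cst (r : seq V) (c : R) : \sum_(y <- r) c = c *+ size r.
Proof. by elim: r => [|a r IH]; rewrite ?big_nil ?big_cons ?IH ?mulrS. Qed.

Lemma lapE (f : V -> R) x :
  laplacian nbr f x = \sum_(y <- nbr x) f y - (deg nbr x)%:R * f x.
Proof. by rewrite /laplacian sumrB sum_cst mulr_natl. Qed.

Lemma step_le (s g f : V -> R) x :
  (0 < deg nbr x)%N -> Fs nbr s f -> (forall y, g y <= f y) ->
  g x + Num.max 0 (s x + laplacian nbr g x - 1) / (deg nbr x)%:R <= f x.
Proof.
move=> dpos [f0 fs] gf.
have dp : 0 < (deg nbr x)%:R :> R by rewrite ltr0n.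
rewrite -lerBrDl ler_pdivrMr //.
have := fs x; rewrite !lapE => hf.
have hs : \sum_(y <- nbr x) g y <= \sum_(y <- nbr x) f y by apply: ler_sum.
have := gf x => hgx.
have hp : 0 <= (f x - g x) * (deg nbr x)%:R by apply: mulr_ge0; lra.
rewrite ge_max; apply/andP; split => //.
nra.
Qed.

Lemma legal_le (s : V -> R) (T : set R) (u : R -> V -> R) (f : V -> R) :
  (forall x, (0 < deg nbr x)%N) ->
  toppling_procedure T u -> legal nbr s T u -> Fs nbr s f ->
  forall t, T t -> forall x, u t x <= f x.
Proof.
move=> dpos [[wo clT T0 Tge0] [u0 uge0 umono ucont]] leg Ff.
suff H : ~ exists t, T t /\ exists x, f x < u t x.
  move=> t Tt x; rewrite leNgt; apply/negP => hlt; apply: H.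
  by exists t; split => //; exists x.
move=> hA.
have [m [Tm [x0 hm]] minm] := wo [set t | T t /\ exists x, f x < u t x]
  (fun t (h : T t /\ _) => proj1 h) hA.
have minm' : forall r, T r -> r < m -> forall x, u r x <= f x.
  move=> r Tr rm x; rewrite leNgt; apply/negP => hlt.
  have := minm r (conj Tr (ex_intro _ x hlt)); rewrite leNgt rm //.
have m0 : m != 0.
  apply/eqP => m0; move: hm; rewrite m0 u0; have := Ff.1 x0; lra.
have mpos : 0 < m by rewrite lt_def m0 Tge0.
pose B := [set r | T r /\ r < m].
have B0 : B !=set0 by exists 0; split.
have Bub : has_ubound B by exists m => r [_ /ltW].
have Bsup : sup B <= m by apply: ge_sup => // r [_ /ltW].
have Tp : T (sup B).
  apply: clT; apply: (closureS (A := B)); first by move=> r [].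
  exact: closure_sup.
have [plt|pge] := ltP (sup B) m.
  have := leg m x0 Tm m0; rewrite /tminus -/B => hl.
  have := step_le s (u (sup B)) f x0 (dpos x0) Ff (minm' _ Tp plt).
  rewrite /s_at in hl; lra.
have pm : sup B = m by apply/eqP; rewrite eq_le Bsup pge.
have hr : forall n : nat, {r | B r & m - n.+1%:R^-1 < r}.
  move=> n; apply: cid2; rewrite -{1}pm; apply: sup_adherent => //.
  idtac.
pose r n := s2val (hr n).
pose ts := fix ts n := match n with 0%N => r 0%N | k.+1 => Num.max (ts k) (r k.+1) end.
have tsB : forall n, B (ts n).
  elim => [|n IH] /=; first exact: (s2valP (hr 0%N)).
  have [h|h] := leP (ts n) (r n.+1); first exact: (s2valP (hr n.+1)).
  exact: IH.
have tsr : forall n, r n <= ts n.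
  by case => [|n] //=; rewrite le_max lexx orbT.
have tsm : {homo ts : n k / (n <= k)%N >-> n <= k}.
  by apply/nondecreasing_seqP => n /=; rewrite le_max lexx.
have tsc : ts @ \oo --> m.
  apply: (@squeeze_cvgr _ _ _ _ (fun n => m - n.+1%:R^-1) (fun _ => m)).
  - near=> n; apply/andP; split.
      by apply: ltW; apply: lt_le_trans (tsr n); exact: (s2valP' (hr n)).
    by apply: ltW; have [] := tsB n.
  - rewrite -[X in _ --> X]subr0; apply: cvgB; first exact: cvg_cst.
    exact: cvg_harmonic.
  - exact: cvg_cst.
have hc := ucont ts m (fun n => (tsB n).1) tsm tsc x0.
suff : u m x0 <= f x0 by lra.
apply: (closed_cvg _ (@closed_le _ (f x0)) _ _ hc).
near=> n; apply: minm'; [exact: (tsB n).1 | exact: (tsB n).2].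
Unshelve. all: by end_near.
Qed.

Section Par.
Variable (s : V -> R).

Fixpoint par (n : nat) : V -> R :=
  match n with
  | 0%N => fun _ => 0
  | k.+1 => fun x => par k x +
       Num.max 0 (s x + laplacian nbr (par k) x - 1) / (deg nbr x)%:R
  end.

Lemma par_ge0 n x : 0 <= par n x.
Proof.
elim: n x => [|n IH] x /=; first by [].
by apply: addr_ge0 => //; apply: divr_ge0; rewrite ?le_max ?lexx.
Qed.

Lemma par_step n x : par n x <= par n.+1 x.
Proof. by rewrite /= lerDl; apply: divr_ge0; rewrite ?le_max ?lexx. Qed.

Lemma par_mono x : {homo (fun n => par n x) : n k / (n <= k)%N >-> n <= k}.
Proof. by apply/nondecreasing_seqP => n; apply: par_step. Qed.

Definition Tnat : set R := [set t | exists n : nat, t = n%:R].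
Definition upar (t : R) : V -> R := par (Num.truncn t).

Lemma nat_close (a b : nat) : `|a%:R - b%:R : R| < 1 -> a = b.
Proof.
move=> h; case: (ltngtP a b) => // hab; exfalso; move: h.
- have : (a.+1%:R <= b%:R :> R) by rewrite ler_nat.
  rewrite -natr1 => h1; rewrite ltr_norml => /andP[h2 h3]; lra.
- have : (b.+1%:R <= a%:R :> R) by rewrite ler_nat.
  rewrite -natr1 => h1; rewrite ltr_norml => /andP[h2 h3]; lra.
Qed.

Lemma Tnat_closed : closed Tnat.
Proof.
move=> t ct.
have h2 : 0 < 2^-1 :> R by rewrite invr_gt0.
have [_ [[k ->] hk]] := ct _ (nbhsx_ballx t _ h2).
rewrite /ball /= in hk.
have [->|tk] := eqVneq t k%:R; first by exists k.
have he : 0 < `|t - k%:R| by rewrite normr_gt0 subr_eq0.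
have [_ [[k' ->] hk']] := ct _ (nbhsx_ballx t _ he).
rewrite /ball /= in hk'.
have := ler_distD t k%:R k'%:R; rewrite [`|k%:R - t|]distrC => hd.
have hkk : `|k%:R - k'%:R : R| < 1.
  apply: (le_lt_trans hd); lra.
by move: hk'; rewrite (nat_close _ _ hkk) ltxx.
Qed.

Lemma Tnat_wo : well_ordered_set Tnat.
Proof.
move=> A AT [a Aa].
have [n an] := AT a Aa; rewrite an in Aa.
have ex : exists n, `[< A n%:R >] by exists n; apply/asboolP.
case: (ex_minnP ex) => m /asboolP Am minm.
exists m%:R => // b Ab; have [j bj] := AT b Ab; rewrite bj ler_nat.
by apply: minm; apply/asboolP; rewrite -bj.
Qed.

Lemma upar_top : toppling_procedure Tnat upar.
Proof.
split; split.
- exact: Tnat_wo.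
- exact: Tnat_closed.
- by exists 0%N.
- by move=> t [n ->] /=; rewrite ler0n.
- by move=> x; rewrite /upar truncn0.
- by move=> t x _; apply: par_ge0.
- move=> t r x [a ->] [b ->]; rewrite ler_nat /upar !natrK => ab.
  exact: par_mono.
- move=> tn t Ttn _ tc x.
  have h2 : 0 < 2^-1 :> R by rewrite invr_gt0.
  have [N _ HN] := (cvgrPdist_lt _ _).1 tc _ h2.
  have eqN : forall n, (N <= n)%N -> tn n = tn N.
    move=> n Nn; have := HN _ Nn; have := HN _ (leqnn N) => /= h1 h3.
    have [a ea] := Ttn n; have [b eb] := Ttn N.
    have hd := ler_distD t (tn n) (tn N); have e1 := distrC (tn n) t.
    rewrite ea eb; congr (_%:R); apply: nat_close.
    rewrite -ea -eb; lra.
  have tN : t = tn N.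
    apply/eqP; rewrite -subr_eq0 -normr_eq0; apply/eqP.
    apply/eqP; rewrite eq_le normr_ge0 andbT; apply/negPn/negP.
    rewrite -ltNge => hpos.
    have [M _ HM] := (cvgrPdist_lt _ _).1 tc _ hpos.
    have := HM (maxn M N) (leq_maxl _ _).
    by rewrite /= eqN ?leq_maxr // ltxx.
  apply/cvgrPdist_lt => e e0; exists N => // n /= Nn.
  by rewrite eqN // -tN subrr normr0.
Qed.

Lemma upar_legal : legal nbr s Tnat upar.
Proof.
move=> t x [n ->] n0.
case: n n0 => [|k] n0; first by rewrite eqxx in n0.
have B0 : [set r | Tnat r /\ r < k.+1%:R] !=set0.
  by exists 0; split; [exists 0%N | rewrite ltr0n].
have tm : tminus Tnat k.+1%:R = k%:R.
  apply/eqP; rewrite eq_le; apply/andP; split.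
  - apply: ge_sup => // r [[j ->]]; rewrite ltr_nat ltnS ler_nat; done.
  - apply: sup_upper_bound; last by split; [exists k | rewrite ltr_nat].
    by split => //; exists k.+1%:R => r [_ /ltW].
rewrite tm /upar /s_at !natrK /= addrAC subrr add0r.
done.
Qed.

Lemma sum_cvg (F : nat -> V -> R) (G : V -> R) (r : seq V) :
  (forall y, F n y @[n --> \oo] --> G y) ->
  \sum_(y <- r) F n y @[n --> \oo] --> \sum_(y <- r) G y.
Proof.
move=> h; elim: r => [|a r IH].
  rewrite big_nil; under eq_cvg do rewrite big_nil; exact: cvg_cst.
rewrite big_cons; under eq_cvg do rewrite big_cons; exact: cvgD.
Qed.

Lemma par_lim (dpos : forall x, (0 < deg nbr x)%N)
  (hb : forall y, has_ubound (range (fun n => par n y))) :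
  Fs nbr s (fun y => sup (range (fun n => par n y))).
Proof.
pose g y := sup (range (fun n => par n y)).
have cg : forall y, (fun n => par n y) @ \oo --> g y.
  move=> y; apply: nondecreasing_cvgn; [exact: par_mono | exact: hb].
split.
  move=> y; apply: le_trans (par_ge0 0 y) _; apply: sup_upper_bound.
    by split; [exists (par 0 y); exists 0%N | exact: hb].
  by exists 0%N.
move=> x.
have dp : 0 < (deg nbr x)%:R :> R by rewrite ltr0n.
have ale : forall n, s x + laplacian nbr (par n) x - 1
    - (deg nbr x)%:R * (par n.+1 x - par n x) <= 0.
  move=> n; rewrite /= [par n x + _]addrC addrK mulrC divfK ?gt_eqF //.
  rewrite subr_le0 le_max lexx orbT //.
have ac : (fun n => s x + laplacian nbr (par n) x - 1
    - (deg nbr x)%:R * (par n.+1 x - par n x)) @ \oo -->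
    s x + laplacian nbr g x - 1 - (deg nbr x)%:R * (g x - g x).
  apply: cvgB; first apply: cvgB; first apply: cvgD.
  - exact: cvg_cst.
  - apply: sum_cvg => y; apply: cvgB; exact: cg.
  - exact: cvg_cst.
  - apply: cvgM; first exact: cvg_cst.
    apply: cvgB; last exact: cg.
    by have := cg x; rewrite -cvg_shiftS.
have hl : s x + laplacian nbr g x - 1 - (deg nbr x)%:R * (g x - g x) <= 0.
  apply: (closed_cvg _ (@closed_le _ 0) _ _ ac).
  by near=> n; exact: ale.
move: hl; rewrite subrr mulr0 subr0; lra.
Unshelve. all: by end_near.
Qed.

Lemma unb_prop (dpos : forall x, (0 < deg nbr x)%N) z w : w \in nbr z ->
  ~ has_ubound (range (fun n => par n w)) ->
  ~ has_ubound (range (fun n => par n z)).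
Proof.
move=> wz hw [M hM]; apply: hw.
exists ((deg nbr z)%:R * M - s z + 1) => _ [n _ <-].
have dp : 0 < (deg nbr z)%:R :> R by rewrite ltr0n.
have h1 : par n w <= \sum_(v <- nbr z) par n v.
  rewrite (big_rem w) //= lerDl; apply: sumr_ge0 => v _; exact: par_ge0.
have h2 : par n.+1 z <= M by apply: hM; exists n.+1.
have h3 : (deg nbr z)%:R * par n.+1 z <= (deg nbr z)%:R * M.
  by rewrite ler_pM2l.
have h4 : (deg nbr z)%:R * par n.+1 z = (deg nbr z)%:R * par n z +
    Num.max 0 (s z + laplacian nbr (par n) z - 1).
  by rewrite /= mulrDr [_ * (_ / _)]mulrC divfK ?gt_eqF.
have h5 : s z + laplacian nbr (par n) z - 1 <= Num.max 0 (s z + laplacian nbr (par n) z - 1).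
  by rewrite le_max lexx orbT.
rewrite lapE in h4 h5; lra.
Qed.

Lemma unb_path (dpos : forall x, (0 < deg nbr x)%N) p z :
  path (fun a b => b \in nbr a) z p ->
  ~ has_ubound (range (fun n => par n (last z p))) ->
  ~ has_ubound (range (fun n => par n z)).
Proof.
elim: p z => [|a p IH] z //= /andP[az pa] h.
apply: (unb_prop dpos _ _ az); exact: IH pa h.
Qed.

Lemma par_final (dpos : forall x, (0 < deg nbr x)%N)
  (conn : graph_connected nbr) x :
  (odometer nbr s x <= final_value Tnat upar x)%E.
Proof.
have lb : forall n, ((par n x)%:E <= final_value Tnat upar x)%E.
  move=> n; apply: ereal_sup_ubound; exists n%:R; first by exists n.
  by rewrite /upar natrK.
have [hb|hnb] := pselect (forall y, has_ubound (range (fun n => par n y))).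
  apply: (@le_trans _ _ (sup (range (fun n => par n x)))%:E).
    apply: ereal_inf_lbound; exists (fun y => sup (range (fun n => par n y))) => //.
    exact: par_lim.
  rewrite -ereal_sup_EFin //; last by exists (par 0 x); exists 0%N.
  apply: ge_ereal_sup => _ [_ [n _ <-] <-]; exact: lb.
have [y hy] := (existsNP _).2 hnb.
have [p [hp hl]] := conn x y.
have hx : ~ has_ubound (range (fun n => par n x)).
  by apply: (unb_path dpos _ _ hp); rewrite hl.
suff -> : final_value Tnat upar x = +oo%E by rewrite leey.
move: (lb 0%N); case E: (final_value Tnat upar x) => [r| |] // _.
exfalso; apply: hx; exists r => _ [n _ <-]; rewrite -lee_fin -E; exact: lb.
Qed.
End Par.
End Aux.

Theorem lemma2p10 (R : realType) (V : eqType) (nbr : V -> seq V) (s : V -> R) :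
  undirected_locally_finite nbr ->
  graph_connected nbr ->
  (forall x, (0 < deg nbr x)%N) ->
  forall x : V,
    odometer nbr s x =
    ereal_sup [set e | exists (T : set R) (u : R -> V -> R),
                 [/\ toppling_procedure T u, legal nbr s T u &
                     e = final_value T u x]].
Proof.
move=> _ conn dpos x.
apply/eqP; rewrite eq_le; apply/andP; split.
- apply: (le_trans (@par_final R V nbr s dpos conn x)).
  apply: ereal_sup_ubound; exists (@Tnat R), (@upar R V nbr s); split => //.
  + exact: upar_top.
  + exact: upar_legal.
- apply: ge_ereal_sup => _ [T [u [tp lg ->]]].
  apply: ge_ereal_sup => _ [t Tt <-].
  apply: le_ereal_inf_tmp => _ [f Ff <-].
  rewrite lee_fin; exact: (@legal_le R V nbr s T u f dpos tp lg Ff).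
Qed.
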